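(* Let $n$ be odd and let $A$ be a latin square on the symbol set $\{0,\dots,n-1\}$ which is idempotent (the entry in row $x$, column $x$ is $x$) and commutative (the entry in row $x$, column $y$ equals the entry in row $y$, column $x$). Let $X=\{0,\dots,n-1\}\times\{0,1,2\}$ and let $S_{3n}$ be the Steiner latin square on $X$ associated with the Steiner triple system $S^1\cup S^2$, where $$S^1=\{\{(x,i),(y,i),(z,i+1 \bmod 3)\} : (x,y,z)\in A,\ x\ne y,\ i\in\{0,1,2\}\},\qquad S^2=\{\{(x,0),(x,1),(x,2)\}: x\in\{0,\dots,n-1\}\}.$$ For a transversal $T$ of $A$ define $T'\subseteq X^3$ as follows: for each $(a,b,c)\in T$ with $a\ne b$, put $((a,0),(b,0),(c,1)),\ ((a,1),(b,1),(c,2)),\ ((a,2),(b,2),(c,0))$ into $T'$; for each $(a,a,a)\in T$, put $((a,0),(a,1),(a,2)),\ ((a,1),(a,2),(a,0)),\ ((a,2),(a,0),(a,1))$ into $T'$. Then $T'$ is a transversal of $S_{3n}$, the map $T\mapsto T'$ is injective, and pairwise disjoint transversals of $A$ are mapped to pairwise disjoint transversals of $S_{3n}$.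
   Context: A latin square of order $m$ on a symbol set $Y$ with $|Y|=m$ is identified with a set of ordered triples $(r,c,s)\in Y^3$ meaning symbol $s$ is in row $r$, column $c$, such that each row and each column contains each symbol exactly once. A transversal is a set of $m$ entries containing exactly one entry from each row and each column, with no symbol repeated. A Steiner triple system (STS) on a set $Y$ is a set of $3$-element subsets of $Y$ such that every $2$-element subset of $Y$ lies in exactly one of them; $S^1\cup S^2$ above is an STS on $X$ (Bose's construction). The Steiner latin square of an STS on $Y$ is the latin square consisting of the triples $(a,a,a)$ for all $a\in Y$ together with all six ordered triples $(x,y,z)$ obtained by ordering each triple $\{x,y,z\}$ of the STS. *)

(* Defs.v *)
From mathcomp Require Import all_boot.
Set Implicit Arguments. Unset Strict Implicit. Unset Printing Implicit Defensive.

Section Defs.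
Variable Y : finType.

Definition latin_square (L : {set Y * Y * Y}) : Prop :=
  [/\ forall r c, #|[set t in L | (t.1.1 == r) && (t.1.2 == c)]| = 1,
      forall r s, #|[set t in L | (t.1.1 == r) && (t.2 == s)]| = 1 &
      forall c s, #|[set t in L | (t.1.2 == c) && (t.2 == s)]| = 1].

Definition ls_transversal (L T : {set Y * Y * Y}) : Prop :=
  [/\ T \subset L, #|T| = #|Y|,
      forall r, #|[set t in T | t.1.1 == r]| = 1,
      forall c, #|[set t in T | t.1.2 == c]| = 1 &
      {in T &, forall t u, t.2 = u.2 -> t = u}].

Definition steiner_ls (S : {set {set Y}}) : {set Y * Y * Y} :=
  [set t : Y * Y * Y |
     ((t.1.1 == t.1.2) && (t.1.2 == t.2))
     || ([set t.1.1; t.1.2; t.2] \in S) && (#|[set t.1.1; t.1.2; t.2]| == 3)].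
End Defs.

Section Bose.
Variable n : nat.
Definition i0 : 'I_3 := @inord 2 0.
Definition i1 : 'I_3 := @inord 2 1.
Definition i2 : 'I_3 := @inord 2 2.
Definition succ3 (i : 'I_3) : 'I_3 := @inord 2 ((i + 1) %% 3).

Definition Xn := ('I_n * 'I_3)%type.

Definition S1 (A : {set 'I_n * 'I_n * 'I_n}) : {set {set Xn}} :=
  [set [set ((t.1.1.1, t.2) : Xn); (t.1.1.2, t.2); (t.1.2, succ3 t.2)]
     | t in [set u : 'I_n * 'I_n * 'I_n * 'I_3 | (u.1 \in A) && (u.1.1.1 != u.1.1.2)]].

Definition S2 : {set {set Xn}} :=
  [set [set ((x, i0) : Xn); (x, i1); (x, i2)] | x : 'I_n].

Definition S3n (A : {set 'I_n * 'I_n * 'I_n}) : {set Xn * Xn * Xn} :=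
  steiner_ls (S1 A :|: S2).

Definition lift_entry (t : 'I_n * 'I_n * 'I_n) : {set Xn * Xn * Xn} :=
  let: (a, b, c) := t in
  if a != b then
    [set (((a, i0), (b, i0), (c, i1)) : Xn * Xn * Xn);
         ((a, i1), (b, i1), (c, i2)); ((a, i2), (b, i2), (c, i0))]
  else
    [set (((a, i0), (a, i1), (a, i2)) : Xn * Xn * Xn);
         ((a, i1), (a, i2), (a, i0)); ((a, i2), (a, i0), (a, i1))].

Definition Tprime (T : {set 'I_n * 'I_n * 'I_n}) : {set Xn * Xn * Xn} :=
  \bigcup_(t in T) lift_entry t.
End Bose.

(* Main.v *)
Require Import Defs.
From mathcomp Require Import all_boot.

Lemma v0 : val i0 = 0. Proof. by rewrite /= inordK. Qed.
Lemma v1 : val i1 = 1. Proof. by rewrite /= inordK. Qed.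
Lemma v2 : val i2 = 2. Proof. by rewrite /= inordK. Qed.
Lemma vs j : val (succ3 j) = (val j + 1) %% 3. Proof. by rewrite /= inordK // ltn_mod. Qed.
Lemma s0 : succ3 i0 = i1. Proof. by apply/val_inj; rewrite vs v0 v1. Qed.
Lemma s1 : succ3 i1 = i2. Proof. by apply/val_inj; rewrite vs v1 v2. Qed.
Lemma s2 : succ3 i2 = i0. Proof. by apply/val_inj; rewrite vs v2 v0. Qed.
Lemma d01 : (i0 == i1) = false. Proof. by rewrite -val_eqE v0 v1. Qed.
Lemma d02 : (i0 == i2) = false. Proof. by rewrite -val_eqE v0 v2. Qed.
Lemma d12 : (i1 == i2) = false. Proof. by rewrite -val_eqE v1 v2. Qed.
Lemma d10 : (i1 == i0) = false. Proof. by rewrite -val_eqE v0 v1. Qed.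
Lemma d20 : (i2 == i0) = false. Proof. by rewrite -val_eqE v0 v2. Qed.
Lemma d21 : (i2 == i1) = false. Proof. by rewrite -val_eqE v1 v2. Qed.
Lemma I3cases (j : 'I_3) : [\/ j = i0, j = i1 | j = i2].
Proof. case: j => [[|[|[|k]]] Hk]; [constructor 1|constructor 2|constructor 3|done]; apply/val_inj; by rewrite /= ?v0 ?v1 ?v2. Qed.

Ltac i3 j := case: (I3cases j) => ->; rewrite ?(s0, s1, s2, d01, d02, d12, d10, d20, d21, eqxx).

Lemma s_inj : injective succ3.
Proof. move=> j k; i3 j; i3 k; move/eqP; by rewrite ?d01 ?d02 ?d12 ?d10 ?d20 ?d21 => // /eqP. Qed.
Lemma s3 j : succ3 (succ3 (succ3 j)) = j. Proof. by i3 j. Qed.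
Lemma sneq j : (j == succ3 j) = false. Proof. by i3 j. Qed.
Lemma sneq' j : (succ3 j == j) = false. Proof. by i3 j. Qed.
Lemma ssneq j : (j == succ3 (succ3 j)) = false. Proof. by i3 j. Qed.

Lemma card1E (T : finType) (S : {set T}) e :
  e \in S -> (forall u, u \in S -> u = e) -> #|S| = 1.
Proof.
move=> He H; have -> : S = [set e]; last exact: cards1.
apply/setP => u; rewrite inE; apply/idP/eqP => [/H|->] //.
Qed.

Lemma card1_uniq (T : finType) (S : {set T}) x y :
  #|S| = 1 -> x \in S -> y \in S -> x = y.
Proof. move/eqP/cards1P => [z ->]; rewrite !inE => /eqP -> /eqP ->. done. Qed.

Lemma card3 (T : finType) (x y z : T) :
  x != y -> x != z -> y != z -> #|[set x; y; z]| = 3.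
Proof.
move=> xy xz yz; rewrite setUC cardsU1 cards2 xy !inE.
by rewrite negb_or ![z == _]eq_sym xz yz.
Qed.

Section Main.
Variable n : nat.
Set Implicit Arguments. Unset Strict Implicit.
Implicit Types t : 'I_n * 'I_n * 'I_n.

Definition g t (j : 'I_3) : Xn n * Xn n * Xn n :=
  if t.1.1 != t.1.2 then ((t.1.1, j), (t.1.2, j), (t.2, succ3 j))
  else ((t.1.1, j), (t.1.2, succ3 j), (t.2, succ3 (succ3 j))).

Definition nrm t := t.1.1 = t.1.2 -> t.2 = t.1.1.

Lemma g_row t j : (g t j).1.1 = (t.1.1, j). Proof. by rewrite /g; case: ifP. Qed.
Lemma g_col t j : (g t j).1.2 = (t.1.2, if t.1.1 != t.1.2 then j else succ3 j).
Proof. by rewrite /g; case: ifP. Qed.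
Lemma g_sym t j : (g t j).2 = (t.2, if t.1.1 != t.1.2 then succ3 j else succ3 (succ3 j)).
Proof. by rewrite /g; case: ifP. Qed.

Ltac grow t j := rewrite (_ : (g t j).1.1 = (t.1.1, j)); last exact: g_row.
Ltac gcol t j := rewrite (_ : (g t j).1.2 = (t.1.2, if t.1.1 != t.1.2 then j else succ3 j)); last exact: g_col.
Ltac gsym t j := rewrite (_ : (g t j).2 = (t.2, if t.1.1 != t.1.2 then succ3 j else succ3 (succ3 j))); last exact: g_sym.

Lemma g_inj t t' j j' : g t j = g t' j' -> t = t' /\ j = j'.
Proof.
move=> E.
have := congr1 (fun u => u.1.1) E; rewrite !g_row => -[E1 ->].
have := congr1 (fun u => u.1.2.1) E; rewrite !g_col /= => E2.
have := congr1 (fun u => u.2.1) E; rewrite !g_sym /= => E3.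
split => //; move: E1 E2 E3; clear E; case: t => [[a b] c]; case: t' => [[a' b'] c'] /= -> -> -> //.
Qed.

Lemma lift_g t u : nrm t -> (u \in lift_entry t) = [exists j, u == g t j].
Proof.
case: t => [[a b] c] Hn; rewrite /lift_entry /g /=.
case: ifP => Hab.
- rewrite !inE; apply/idP/existsP.
  + by case/orP => [/orP[]|] /eqP ->; [exists i0|exists i1|exists i2]; rewrite ?(s0, s1, s2).
  + by case=> j /eqP ->; i3 j; rewrite ?orbT.
- move/negbFE/eqP: Hab => Hab; subst b; rewrite /nrm /= in Hn; rewrite Hn //.
  rewrite !inE; apply/idP/existsP.
  + by case/orP => [/orP[]|] /eqP ->; [exists i0|exists i1|exists i2]; rewrite ?(s0, s1, s2).
  + by case=> j /eqP ->; i3 j; rewrite ?orbT.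
Qed.

Lemma TP (T : {set 'I_n * 'I_n * 'I_n}) u :
  (forall t, t \in T -> nrm t) -> u \in Tprime T ->
  exists t j, t \in T /\ u = g t j.
Proof.
move=> N /bigcupP [t Ht]; rewrite lift_g; last exact: N.
case/existsP => j /eqP ->.
by exists t, j.
Qed.

Lemma gT (T : {set 'I_n * 'I_n * 'I_n}) t j :
  t \in T -> nrm t -> g t j \in Tprime T.
Proof. move=> Ht N; apply/bigcupP; exists t => //; rewrite lift_g //; apply/existsP; by exists j. Qed.

Lemma normA (A : {set 'I_n * 'I_n * 'I_n}) t :
  latin_square A -> (forall x, (x, x, x) \in A) -> t \in A -> nrm t.
Proof.
case: t => [[a b] c] [Hrc _ _] Hid Ht; rewrite /nrm /= => Eab; subst b.
have := @card1_uniq _ _ (a, a, c) (a, a, a) (Hrc a a).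
by rewrite !inE Ht Hid !eqxx => /(_ isT isT) [].
Qed.

Lemma gS3 (A : {set 'I_n * 'I_n * 'I_n}) t j :
  t \in A -> nrm t -> g t j \in S3n A.
Proof.
rewrite /S3n /steiner_ls inE; case: t => [[a b] c] Ht Hn; rewrite /g /=.
apply/orP; right.
case: ifP => Hab /=.
- apply/andP; split.
  + rewrite inE; apply/orP; left; apply/imsetP; exists ((a, b, c), j) => //.
    by rewrite inE /= Ht Hab.
  + by rewrite card3 // xpair_eqE ?sneq ?andbF // (negbTE Hab).
    idtac.
- move/negbFE/eqP: Hab => Hab; subst b; rewrite /nrm /= in Hn; rewrite Hn //.
  apply/andP; split.
  + rewrite inE; apply/orP; right; apply/imsetP; exists a => //.
    apply/setP => u; rewrite !inE; i3 j; by case: (u == (a, i0)); case: (u == (a, i1)); case: (u == (a, i2)).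
  + by rewrite card3 // xpair_eqE ?sneq ?ssneq ?andbF.
Qed.

Lemma trans_lift (A T : {set 'I_n * 'I_n * 'I_n}) :
  latin_square A -> (forall x, (x, x, x) \in A) ->
  ls_transversal A T -> ls_transversal (S3n A) (Tprime T).
Proof.
move=> HA Hid [Hsub Hcard Hrow Hcol Hsym].
have N : forall t, t \in T -> nrm t.
  by move=> t Ht; apply: (normA HA Hid); exact: (subsetP Hsub).
split.
- apply/subsetP => u /(TP N) [t [j [Ht ->]]]; apply: gS3; [exact: (subsetP Hsub)|exact: N].
- have -> : Tprime T = [set g p.1 p.2 | p in setX T [set: 'I_3]].
    apply/setP => u; apply/idP/imsetP.
    + move/(TP N) => [t [j [Ht ->]]]; exists (t, j) => //; by rewrite inE Ht in_setT.
    + by case=> [[t j]] /setXP [Ht _] ->; apply: gT => //; exact: N.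
  rewrite card_imset; last by move=> [t j] [t' j'] /= /g_inj [-> ->].
  by rewrite cardsX cardsT Hcard card_prod.
- move=> [x i].
  have /cards1P [t0 Et0] : #|[set t in T | t.1.1 == x]| == 1 by rewrite Hrow.
  have : t0 \in [set t in T | t.1.1 == x] by rewrite Et0 set11.
  rewrite inE => /andP [Ht0 /eqP Hx].
  apply: (@card1E _ _ (g t0 i)).
  + rewrite inE gT //; last exact: N.
    grow t0 i; by rewrite Hx eqxx.
  + move=> u; rewrite inE => /andP [/(TP N) [t [j [Ht ->]]]].
    grow t j; rewrite xpair_eqE => /andP [/eqP Ht1 /eqP ->].
    have : t \in [set t in T | t.1.1 == x] by rewrite inE Ht Ht1 eqxx.
    by rewrite Et0 inE => /eqP ->.
- move=> [y i].
  have /cards1P [t0 Et0] : #|[set t in T | t.1.2 == y]| == 1 by rewrite Hcol.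
  have : t0 \in [set t in T | t.1.2 == y] by rewrite Et0 set11.
  rewrite inE => /andP [Ht0 /eqP Hy].
  apply: (@card1E _ _ (g t0 (if t0.1.1 != t0.1.2 then i else succ3 (succ3 i)))).
  + rewrite inE gT //; last exact: N.
    gcol t0 (if t0.1.1 != t0.1.2 then i else succ3 (succ3 i)); rewrite Hy /=.
    by case: (t0.1.1 != y); rewrite ?s3.
  + move=> u; rewrite inE => /andP [/(TP N) [t [j [Ht ->]]]].
    gcol t j; rewrite xpair_eqE => /andP [/eqP Ht1 /eqP Hj].
    have : t \in [set t in T | t.1.2 == y] by rewrite inE Ht Ht1 eqxx.
    rewrite Et0 inE => /eqP Et; subst t0.
    move: Hj; case: ifP => _ Hj; first by rewrite Hj.
    by rewrite -Hj s3.
- move=> u v /(TP N) [t [j [Ht ->]]] /(TP N) [t' [j' [Ht' ->]]].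
  gsym t j; gsym t' j'; move=> -[E1].
  have Et : t = t' by apply: Hsym.
  subst t'; case: ifP => _; first by move/s_inj ->.
  by move/s_inj/s_inj ->.
Qed.

End Main.

Theorem mainTheorem3 (n : nat) (A : {set 'I_n * 'I_n * 'I_n}) :
  odd n ->
  latin_square A ->
  (forall x : 'I_n, (x, x, x) \in A) ->
  (forall x y z : 'I_n, (x, y, z) \in A -> (y, x, z) \in A) ->
  [/\ forall T, ls_transversal A T -> ls_transversal (S3n A) (Tprime T),
      forall T1 T2, ls_transversal A T1 -> ls_transversal A T2 ->
        Tprime T1 = Tprime T2 -> T1 = T2 &
      forall T1 T2, ls_transversal A T1 -> ls_transversal A T2 ->
        [disjoint T1 & T2] -> [disjoint Tprime T1 & Tprime T2]].
Proof.
move=> _ HA Hid _.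
have NT : forall T, ls_transversal A T -> forall t, t \in T -> nrm t.
  move=> T [Hsub _ _ _ _] t Ht; apply: (normA HA Hid); exact: (subsetP Hsub).
split.
- move=> T; exact: trans_lift.
- move=> T1 T2 H1 H2 E.
  have sub : forall U V, ls_transversal A U -> ls_transversal A V ->
      Tprime U = Tprime V -> forall t, t \in U -> t \in V.
    move=> U V HU HV EUV t Ht.
    have : g t i0 \in Tprime V by rewrite -EUV gT //; exact: (NT U HU).
    by case/(TP (NT V HV)) => t' [j [Ht' /g_inj [-> _]]].
  apply/setP => t; apply/idP/idP; [exact: sub|exact: sub].
- move=> T1 T2 H1 H2 Hd; rewrite -setI_eq0; apply/eqP/setP => u.
  rewrite inE in_set0; apply/negbTE/negP => /andP [].
  move=> /(TP (NT _ H1)) [t [j [Ht ->]]] /(TP (NT _ H2)) [t' [j' [Ht' /g_inj [Et _]]]].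
  subst t'; by rewrite (disjointFr Hd Ht) in Ht'.
Qed.
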